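(* Let $\|\cdot\|$ be a norm on $\mathbb{R}^d$, $\rho\ge 0$, and $\eta\in[0,1)$. Define $$\mathcal{G}_{\mathsf{mean}}(\rho,\eta)=\Big\{p \;:\; \|\mathbb{E}_r[X]-\mathbb{E}_p[X]\|\le\rho \text{ for all } r\le \tfrac{p}{1-\eta}\Big\}.$$ Then for every $\epsilon$ with $2\epsilon\le\eta<1$, $$\sup_{p_1,p_2\in\mathcal{G}_{\mathsf{mean}}(\rho,\eta):\ \mathsf{TV}(p_1,p_2)\le 2\epsilon}\ \|\mathbb{E}_{p_1}[X]-\mathbb{E}_{p_2}[X]\|\le 2\rho .$$
   Context: All distributions are probability distributions on $\mathbb{R}^d$ (with finite means where used). For distributions $r,p$ and $\eta\in[0,1)$, the notation $r\le \frac{p}{1-\eta}$ means that $r$ is a probability distribution with $r(A)\le p(A)/(1-\eta)$ for every measurable set $A$ (i.e. $r$ is obtained from $p$ by deleting at most an $\eta$ fraction of mass and renormalizing). $\mathsf{TV}(p,q)=\sup_A |p(A)-q(A)|$ is the total variation distance. *)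

(* Defs.v *)
(* R^d is modelled as the measurable space
   d.-tuple R (product Borel sigma-algebra generated by the coordinates,
   the library's canonical instance); vectors (means) live in 'rV[R]_d. *)
From HB Require Import structures.
From mathcomp Require Import all_boot all_order all_algebra.
From mathcomp Require Import all_classical all_reals all_analysis.
Set Implicit Arguments. Unset Strict Implicit. Unset Printing Implicit Defensive.
Import Order.TTheory GRing.Theory Num.Theory.
Local Open Scope classical_set_scope.
Local Open Scope ring_scope.

Definition is_norm (R : realType) (d : nat) (N : 'rV[R]_d -> R) : Prop :=
  [/\ (forall x, N x = 0 -> x = 0),
      (forall (a : R) x, N (a *: x) = `|a| * N x) &
      (forall x y, N (x + y) <= N x + N y)].

Definition has_finite_mean (R : realType) (d : nat)
  (p : probability (d.-tuple R) R) : Prop :=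
  forall i : 'I_d, p.-integrable setT (fun x => (tnth x i)%:E).

Definition mean (R : realType) (d : nat) (p : probability (d.-tuple R) R)
  : 'rV[R]_d :=
  \row_(i < d) Rintegral p setT (fun x => tnth x i).

Definition deletion (R : realType) (d : nat)
  (r p : probability (d.-tuple R) R) (eta : R) : Prop :=
  forall A : set (d.-tuple R), measurable A ->
    (r A <= ((1 - eta)^-1)%:E * p A)%E.

Definition TV (R : realType) (d : nat) (p q : probability (d.-tuple R) R)
  : \bar R :=
  ereal_sup [set `|(p A - q A)%E|%E | A in [set A | measurable A]].

Definition G_mean (R : realType) (d : nat) (N : 'rV[R]_d -> R) (rho eta : R)
  (p : probability (d.-tuple R) R) : Prop :=
  has_finite_mean p /\
  forall r : probability (d.-tuple R) R, deletion r p eta ->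
    N (mean r - mean p) <= rho.

(* Main.v *)
Require Import Defs.
From HB Require Import structures.
From mathcomp Require Import all_boot all_order all_algebra.
From mathcomp Require Import all_classical all_reals all_analysis.
From mathcomp Require Import lra.
Import Order.TTheory GRing.Theory Num.Theory.
Local Open Scope classical_set_scope.
Local Open Scope ring_scope.

Section Helpers.
Context (R : realType) (d : nat).
Implicit Types p : probability (d.-tuple R) R.

Definition nu_ p1 p2 :=
  cadd (charge_of_finite_measure p1) (cscale (-1) (charge_of_finite_measure p2)).

Lemma nuE p1 p2 A : nu_ p1 p2 A = (p1 A - p2 A)%E.
Proof. by rewrite /nu_ /cadd /= /cscale /= /charge_of_finite_measure mulN1e. Qed.

Lemma pE p A : measurable A -> p A = (fine (p A))%:E.
Proof. by move=> mA; rewrite fineK // fin_num_measure. Qed.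

Lemma pge0 p A : 0 <= fine (p A).
Proof. by apply: fine_ge0; apply: measure_ge0. Qed.

Lemma pT p : fine (p setT) = 1.
Proof. by rewrite probability_setT. Qed.

Lemma psplit p A P Nn :
  measurable A -> measurable P -> measurable Nn -> P `|` Nn = setT -> P `&` Nn = set0 ->
  fine (p A) = fine (p (A `&` P)) + fine (p (A `&` Nn)).
Proof.
move=> mA mP mN PN PN0.
have {1}-> : A = (A `&` P) `|` (A `&` Nn) by rewrite -setIUr PN setIT.
rewrite measureU; first by rewrite fineD ?fin_num_measure //; exact: measurableI.
- exact: measurableI.
- exact: measurableI.
by rewrite setIACA setIid PN0 setI0.
Qed.

Lemma mnormE dd (T : measurableType dd) (mu : {measure set T -> \bar R})
  (Q : probability T R) (c : R) A :
  mu setT = c%:E -> 0 < c -> mnormalize mu Q A = (mu A * (c^-1)%:E)%E.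
Proof. by move=> muT c0; rewrite /mnormalize muT eqe (gt_eqF c0) /=. Qed.

Lemma nu_ge0 p1 p2 A : measurable A -> (0 <= nu_ p1 p2 A)%E -> fine (p2 A) <= fine (p1 A).
Proof. by move=> mA; rewrite nuE (pE p1 A mA) (pE p2 A mA) -EFinB lee_fin subr_ge0. Qed.

Lemma nu_le0 p1 p2 A : measurable A -> (nu_ p1 p2 A <= 0)%E -> fine (p1 A) <= fine (p2 A).
Proof. by move=> mA; rewrite nuE (pE p1 A mA) (pE p2 A mA) -EFinB lee_fin subr_le0. Qed.

Lemma real_key (a b c e : R) : 0 <= a -> a <= b -> 0 < e -> e <= c ->
  a * c^-1 <= e^-1 * b.
Proof.
move=> a0 ab e0 ec.
have c0 : 0 < c by apply: lt_le_trans ec.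
have hinv : c^-1 <= e^-1 by rewrite lef_pV2 ?posrE.
apply: le_trans (_ : a * e^-1 <= _); first exact: ler_wpM2l.
rewrite mulrC; apply: ler_wpM2l => //; rewrite invr_ge0; exact: ltW.
Qed.

Lemma key p1 p2 P Nn eta (mP : measurable P) (mN : measurable Nn) :
  hahn_decomposition (nu_ p1 p2) P Nn -> 0 <= eta -> eta < 1 ->
  fine (p1 P) - fine (p2 P) <= eta ->
  deletion (mnormalize (measure_add (mrestr p2 mP) (mrestr p1 mN)) p1) p1 eta /\
  deletion (mnormalize (measure_add (mrestr p2 mP) (mrestr p1 mN)) p1) p2 eta.
Proof.
move=> [[_ Ppos] [_ Nneg] PN PN0] eta0 eta1 hP.
set mu := measure_add _ _.
have muE A : measurable A -> mu A = (fine (p2 (A `&` P)) + fine (p1 (A `&` Nn)))%:E.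
  move=> mA; rewrite /mu measure_addE /mrestr EFinD -!pE //; exact: measurableI.
have c1 : 1 - eta <= fine (p2 P) + fine (p1 Nn).
  have := psplit p1 _ _ _ measurableT mP mN PN PN0; rewrite pT !setTI; lra.
have cpos : 0 < fine (p2 P) + fine (p1 Nn) by lra.
have rE A : measurable A -> mnormalize mu p1 A = (mu A * ((fine (p2 P) + fine (p1 Nn))^-1)%:E)%E.
  move=> mA.
  have muT : mu setT = (fine (p2 P) + fine (p1 Nn))%:E by rewrite muE // !setTI.
  rewrite (mnormE _ _ _ _ _ _ muT cpos); congr (_ * _)%E; exact: muE.

have x21 A : measurable A -> fine (p2 (A `&` P)) <= fine (p1 (A `&` P)).
  move=> mA; apply: nu_ge0; first exact: measurableI.
  exact: (Ppos (A `&` P) (measurableI _ _ mA mP) (@subIsetr _ _ _)).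
have y12 A : measurable A -> fine (p1 (A `&` Nn)) <= fine (p2 (A `&` Nn)).
  move=> mA; apply: nu_le0; first exact: measurableI.
  exact: (Nneg (A `&` Nn) (measurableI _ _ mA mN) (@subIsetr _ _ _)).
split=> A mA; have := lexx (mu A * ((fine (p2 P) + fine (p1 Nn))^-1)%:E)%E;
  rewrite -{1}(rE A mA) => h; apply: le_trans h _;
  rewrite muE // -EFinM (pE _ A mA) -EFinM lee_fin;
  apply: real_key; rewrite ?addr_ge0 ?pge0 //; try lra.
- rewrite (psplit p1 _ _ _ mA mP mN PN PN0); have := x21 _ mA; lra.
- rewrite (psplit p2 _ _ _ mA mP mN PN PN0); have := y12 _ mA; lra.
Qed.
End Helpers.
Arguments nu_ {R d}. Arguments pE {R d}. Arguments key {R d p1 p2 P Nn eta}.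

Theorem lemma3p1 (R : realType) (d : nat) (N : 'rV[R]_d -> R)
  (rho eta eps : R) :
  is_norm N -> 0 <= rho -> 0 <= eta -> eta < 1 -> 2 * eps <= eta ->
  forall p1 p2 : probability (d.-tuple R) R,
    G_mean N rho eta p1 -> G_mean N rho eta p2 ->
    (TV p1 p2 <= (2 * eps)%:E)%E ->
    N (mean p1 - mean p2) <= 2 * rho.
Proof.
move=> [_ Nsc Ntri] rho0 eta0 eta1 epseta p1 p2 [_ G1] [_ G2] TVle.
have [P [Nn hd]] := Hahn_decomposition (nu_ p1 p2).
have [[mP _] [mN _] _ _] := hd.
have hP : fine (p1 P) - fine (p2 P) <= eta.
  have : (`|(p1 P - p2 P)|%E <= TV p1 p2)%E.
    by apply: ereal_sup_ubound; exists P.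
  rewrite (pE p1 P mP) (pE p2 P mP) -EFinB /= => h.
  have := le_trans h TVle; rewrite lee_fin => h2.
  have := ler_norm (fine (p1 P) - fine (p2 P)); lra.
have [r [h1 h2]] : exists r : probability (d.-tuple R) R,
    deletion r p1 eta /\ deletion r p2 eta.
  by exists (mnormalize (measure_add (mrestr p2 mP) (mrestr p1 mN)) p1); exact: key.
have a := G1 _ h1; have b := G2 _ h2.
have NN x : N (- x) = N x by rewrite -scaleN1r Nsc normrN1 mul1r.
have := Ntri (mean p1 - mean r) (mean r - mean p2).
rewrite addrA subrK => h.
have := NN (mean r - mean p1).
rewrite opprB => e; lra.
Qed.
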